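(* Let $X$ be a real Banach space and $M\subseteq X$ a topologically linearly independent set such that $M\cup\{0_X\}$ is a free basis of $X$. Let $N=\{m/\|m\| : m\in M\}$. Then there is an isomorphism of Banach spaces (bounded linear bijection with bounded inverse) $\phi\colon X\to\ell^1(N)$ with $\phi(n)=e_n$ for every $n\in N$, where $e_n$ is the indicator of $\{n\}$. In particular, $M$ is a (long) Schauder basis of $X$.
   Context: A subset $A\subseteq X\setminus\{0\}$ of a topological vector space $X$ is topologically linearly independent if for every neighborhood $W$ of $0$ there is a neighborhood $U$ of $0$ such that for every finite $F\subseteq A$ and reals $\{r_a: a\in F\}$, $\sum_{a\in F}r_a a\in U$ implies $r_a a\in W$ for all $a\in F$. A free basis of a Banach space $X$ is a closed subset $N_0\subseteq X$ containing $0_X$ such that for every Banach space $Y$ and every Lipschitz map $f\colon N_0\to Y$ with $f(0_X)=0_Y$ there is a unique bounded linear map $\hat f\colon X\to Y$ extending $f$. For a set $N$, $\ell^1(N)$ is the Banach space of all $x=(x_n)_{n\in N}$ with $\|x\|=\sum_{n\in N}|x_n|<\infty$ (so only countably many $x_n$ are nonzero). *)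

(* Defs.v *)
From HB Require Import structures.
From mathcomp Require Import all_boot all_order all_algebra.
From mathcomp Require Import all_classical all_reals all_analysis.
Set Implicit Arguments. Unset Strict Implicit. Unset Printing Implicit Defensive.
Import Order.TTheory GRing.Theory Num.Theory.
Import numFieldNormedType.Exports.
Local Open Scope classical_set_scope.
Local Open Scope ring_scope.

Definition is_linear (R : realType) (X Y : normedModType R) (g : X -> Y) :=
  forall (a : R) (x y : X), g (a *: x + y) = a *: g x + g y.

Definition is_bounded (R : realType) (X Y : normedModType R) (g : X -> Y) :=
  exists C : R, forall x : X, `|g x| <= C * `|x|.

Definition top_lin_indep (R : realType) (X : normedModType R) (A : set X) :=
  A `<=` ~` [set 0] /\
  forall W : set X, nbhs (0 : X) W ->
  exists U : set X, nbhs (0 : X) U /\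
    forall (F : seq X) (r : X -> R),
      uniq F -> (forall a, a \in F -> A a) ->
      U (\sum_(a <- F) r a *: a) ->
      forall a, a \in F -> W (r a *: a).

Definition lipschitz_on (R : realType) (X Y : normedModType R) (S : set X)
  (f : X -> Y) :=
  exists L : R, forall x y, S x -> S y -> `|f x - f y| <= L * `|x - y|.

(* A map N0 -> Y is represented by
   a total function X -> Y of which only the values on N0 matter. *)
Definition free_basis (R : realType) (X : completeNormedModType R) (N0 : set X) :=
  closed N0 /\ N0 0 /\
  forall (Y : completeNormedModType R) (f : X -> Y),
    lipschitz_on N0 f -> f 0 = 0 ->
    (exists g : X -> Y, [/\ is_linear g, is_bounded g & forall x, N0 x -> g x = f x]) /\
    (forall g1 g2 : X -> Y,
        is_linear g1 -> is_bounded g1 -> (forall x, N0 x -> g1 x = f x) ->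
        is_linear g2 -> is_bounded g2 -> (forall x, N0 x -> g2 x = f x) ->
        g1 = g2).

(* ell^1(N) for N : set T, represented as functions T -> R vanishing off N
   whose absolute values have finite (unordered) sum over N. *)
Definition ell1 (R : realType) (T : choiceType) (N : set T) : set (T -> R) :=
  [set u | (forall t, ~ N t -> u t = 0) /\
           (\esum_(t in N) (`|u t|%:E) < +oo)%E].

Definition ell1_norm (R : realType) (T : choiceType) (N : set T) (u : T -> R) : R :=
  fine (\esum_(t in N) (`|u t|%:E))%E.

Definition unit_vec (R : realType) (T : choiceType) (n : T) : T -> R :=
  fun t => if t == n then 1 else 0.

(* Main.v *)
Require Import Defs.
From HB Require Import structures.
From mathcomp Require Import all_boot all_order all_algebra.
From mathcomp Require Import all_classical all_reals all_analysis.
From mathcomp Require Import lra.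
Import Order.TTheory GRing.Theory Num.Theory.
Import numFieldNormedType.Exports.
Local Open Scope classical_set_scope.
Local Open Scope ring_scope.
Set Implicit Arguments. Unset Strict Implicit. Unset Printing Implicit Defensive.
Section Linf.
Variables (R : realType) (I : choiceType).

Definition bnd : {pred I -> R} := mem [set f : I -> R | exists M, forall i, `|f i| <= M].

Record linf := Linf { lfun :> I -> R; lfunP : lfun \in bnd }.
HB.instance Definition _ := [isSub for lfun].
HB.instance Definition _ := [Choice of linf by <:].

Lemma bnd_zmod_closed : zmod_closed bnd.
Proof.
split; first by rewrite inE; exists 0 => i; rewrite normr0.
move=> f g; rewrite !inE => -[M fM] [N gN]; exists (M + N) => i.
by rewrite /= (le_trans (ler_normB _ _))// lerD.
Qed.
HB.instance Definition _ := GRing.isZmodClosed.Build (I -> R) bnd bnd_zmod_closed.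
HB.instance Definition _ := [SubChoice_isSubZmodule of linf by <:].

Lemma bnd_scaler_closed : scaler_closed bnd.
Proof.
move=> a f; rewrite !inE => -[M fM]; exists (`|a| * M) => i.
by rewrite /= normrM ler_wpM2l.
Qed.
HB.instance Definition _ := GRing.isScaleClosed.Build R (I -> R) bnd bnd_scaler_closed.
HB.instance Definition _ := [SubZmodule_isSubLmodule of linf by <:].


Definition nrm (f : linf) : R := sup ([set 0] `|` range (fun i => `|f i|)).

Lemma nrm_has (f : linf) : has_sup ([set 0] `|` range (fun i => `|f i|)).
Proof.
split; first by exists 0; left.
case: f => f /=; rewrite inE => -[M fM]; exists (Num.max M 0).
by move=> _ [->|[i _ <-]]; rewrite le_max ?lexx ?fM ?orbT.
Qed.

Lemma nrm_ge (f : linf) i : `|f i| <= nrm f.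
Proof. by apply: (ub_le_sup (proj2 (nrm_has f))); right; exists i. Qed.

Lemma nrm_ge0 (f : linf) : 0 <= nrm f.
Proof. by apply: (ub_le_sup (proj2 (nrm_has f))); left. Qed.

Lemma nrm_le (f : linf) B : 0 <= B -> (forall i, `|f i| <= B) -> nrm f <= B.
Proof.
move=> B0 fB; apply: ge_sup; first by exists 0; left.
by move=> _ [->|[i _ <-]].
Qed.

Lemma linf_add (f g : linf) i : (f + g) i = f i + g i. Proof. by []. Qed.
Lemma linf_scale a (f : linf) i : (a *: f) i = a * f i. Proof. by []. Qed.
Lemma linf_zero i : (0 : linf) i = 0. Proof. by []. Qed.
Lemma linf_opp (f : linf) i : (- f) i = - f i. Proof. by []. Qed.

Lemma nrm_triangle (f g : linf) : nrm (f + g) <= nrm f + nrm g.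
Proof.
apply: nrm_le; first by rewrite addr_ge0 ?nrm_ge0.
by move=> i; rewrite linf_add (le_trans (ler_normD _ _))// lerD ?nrm_ge.
Qed.

Lemma nrmZ (l : R) (f : linf) : nrm (l *: f) = `|l| * nrm f.
Proof.
have H : forall (l : R) (f : linf), nrm (l *: f) <= `|l| * nrm f.
  move=> a h; apply: nrm_le; first by rewrite mulr_ge0 ?nrm_ge0.
  by move=> i; rewrite linf_scale normrM ler_wpM2l ?nrm_ge.
apply/eqP; rewrite eq_le H /=.
have [->|l0] := eqVneq l 0; first by rewrite normr0 mul0r nrm_ge0.
have h := H l^-1 (l *: f); rewrite scalerA mulVf // scale1r normrV ?unitfE // in h.
have lp : 0 < `|l| by rewrite normr_gt0.
have lpi : 0 < `|l|^-1 by rewrite invr_gt0.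
by rewrite -(ler_pM2l lpi) mulrA mulVf ?gt_eqF // mul1r.
Qed.

Lemma nrm_eq0 (f : linf) : nrm f = 0 -> f = 0.
Proof.
move=> f0; apply: val_inj; apply/funext => i /=.
by apply/normr0_eq0/eqP; rewrite eq_le normr_ge0 andbT -f0 nrm_ge.
Qed.

HB.instance Definition _ := Lmodule_isNormed.Build R linf nrm_triangle nrmZ nrm_eq0.

Lemma normE (f : linf) : `|f| = nrm f. Proof. by []. Qed.

Lemma linf_complete (F : set_system linf) : ProperFilter F -> cauchy F -> cvg F.
Proof.
move=> PF /cauchyP Fc.
have ci : forall i, cvg ((fun y : linf => y i) @ F).
  move=> i; apply: cauchy_cvg; apply/cauchyP => e e0.
  have [x Fx] := Fc e e0; exists (x i).
  suff: F [set y : linf | ball (x i) e (y i)] by [].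
  apply: filterS Fx => y; rewrite -!ball_normE /= => xy.
  by rewrite (le_lt_trans _ xy)// -linf_opp -linf_add nrm_ge.
pose l i := lim ((fun y : linf => y i) @ F).
have key : forall e, 0 < e -> exists x, F (ball x e) /\ forall i, `|x i - l i| <= e.
  move=> e e0; have [x Fx] := Fc e e0; exists x; split => // i.
  apply/ler_addgt0Pr => eta eta0.
  have := ci i; rewrite /l => /cvgrPdist_lt/(_ eta eta0) Fl.
  have [y [/= xy ly]] := filter_ex (filterI Fx Fl).
  move: xy; rewrite -ball_normE /= normE => xy.
  rewrite (le_trans (ler_distD (y i) _ _))// ltW// ltrD//; last by rewrite distrC.
  by rewrite (le_lt_trans _ xy)// -linf_opp -linf_add nrm_ge.
have lb : l \in bnd.
  have [x [_ xl]] := key 1 ltr01; rewrite inE; exists (nrm x + 1) => i.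
  rewrite -[l i](subrKC (x i)) (le_trans (ler_normD _ _))// lerD ?nrm_ge//.
  by rewrite distrC.
apply/cvg_ex; exists (Linf lb); apply/cvgrPdist_lt => e e0.
have [x [Fx xl]] := key (e / 2) (divr_gt0 e0 (ltr0n _ 2)).
apply: filterS Fx => y; rewrite -ball_normE /= !normE => xy.
have -> : Linf lb - y = (Linf lb - x) + (x - y) by rewrite addrA subrK.
rewrite (le_lt_trans (nrm_triangle _ _))// [e](splitr e) ler_ltD//.
apply: nrm_le; first by rewrite divr_ge0 ?ltW.
by move=> i; rewrite linf_add linf_opp /= distrC.
Qed.

HB.instance Definition _ := Uniform_isComplete.Build linf linf_complete.
End Linf.

Section Main.
Variables (R : realType) (X : completeNormedModType R) (M : set X).
Hypothesis hT : top_lin_indep M.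

Lemma tli_bound : exists2 d : R, 0 < d &
  forall (F : seq X) (r : X -> R), uniq F -> (forall a, a \in F -> M a) ->
  forall a, a \in F -> `|r a *: a| * d <= `|\sum_(b <- F) r b *: b|.
Proof.
case: hT => _ /(_ (ball (0:X) 1) (nbhsx_ballx _ _ ltr01)) [U [/nbhs_ballP [d d0 dU] HU]].
exists d => // F r uF FM a aF.
rewrite leNgt; apply/negP => H.
have nu0 : 0 < `|r a *: a|.
  by rewrite -(pmulr_lgt0 _ d0) (le_lt_trans _ H).
have := HU F (fun b => `|r a *: a|^-1 * r b) uF FM.
have -> : \sum_(b <- F) (`|r a *: a|^-1 * r b) *: b = `|r a *: a|^-1 *: \sum_(b <- F) r b *: b.
  by rewrite scaler_sumr; apply: eq_bigr => b _; rewrite scalerA.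
move=> /(_ _ a aF); rewrite -!ball_normE /= !sub0r !normrN.
rewrite -scalerA (normrZ _ (r a *: a)) ger0_norm ?invr_ge0 ?normr_ge0 // mulVf ?gt_eqF // ltxx.
move=> H2; suff: false by []; apply: H2; apply: dU; rewrite -ball_normE /= sub0r normrN normrZ ger0_norm ?invr_ge0 ?normr_ge0 //.
by rewrite ltr_pdivrMl // mulrC.
Qed.

Lemma M_neq0 m : M m -> m != 0.
Proof. by case: hT => + _ => /(_ m) H /H /eqP. Qed.

Lemma M0 : ~ M 0.
Proof. by move=> /M_neq0; rewrite eqxx. Qed.

Definition nz (m : X) : X := `|m|^-1 *: m.

Lemma norm_nz m : M m -> `|nz m| = 1.
Proof.
move=> /M_neq0 m0; rewrite /nz normrZ ger0_norm ?invr_ge0 ?normr_ge0 //.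
by rewrite mulVf // normr_eq0.
Qed.

Lemma sum2 (m m' : X) (r : X -> R) : m != m' ->
  \sum_(b <- [:: m; m']) r b *: b = r m *: m + r m' *: m'.
Proof. by move=> _; rewrite big_cons big_seq1. Qed.

Lemma M_sep : exists2 d : R, 0 < d &
  forall m m', M m -> M m' -> m != m' -> `|m| * d <= `|m - m'|.
Proof.
have [d d0 H] := tli_bound; exists d => // m m' Mm Mm' mm'.
have := H [:: m; m'] (fun b => if b == m then 1 else -1).
rewrite /= inE mm' /= => /(_ isT); have m'm : (m' == m) = false by rewrite eq_sym (negbTE mm').
rewrite sum2 // eqxx m'm.
have FM : forall a, a \in [:: m; m'] -> M a by move=> a; rewrite !inE => /orP[] /eqP ->.
by move/(_ FM m); rewrite inE eqxx /= scale1r scaleN1r; apply.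
Qed.

Lemma nz_inj m m' : M m -> M m' -> nz m = nz m' -> m = m'.
Proof.
move=> Mm Mm' e; apply/eqP/negPn/negP => mm'.
have [d d0 H] := tli_bound.
have := H [:: m; m'] (fun b => if b == m then `|m|^-1 else - `|m'|^-1).
rewrite /= inE mm' /= => /(_ isT); have m'm : (m' == m) = false by rewrite eq_sym (negbTE mm').
rewrite sum2 // eqxx m'm.
rewrite scaleNr -/(nz m) -/(nz m') e subrr normr0.
have FM : forall a, a \in [:: m; m'] -> M a by move=> a; rewrite !inE => /orP[] /eqP ->.
move/(_ FM m); rewrite inE eqxx /= => /(_ isT).
by rewrite -/(nz m) norm_nz // mul1r leNgt d0.
Qed.

Let N0 := M `|` [set 0].

Lemma sepL : exists2 L : R, 1 <= L &
  forall x y, N0 x -> N0 y -> x != y -> `|x| + `|y| <= L * `|x - y|.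
Proof.
have [d d0 H] := M_sep.
have L1 : 1 <= 2 / d + 1 by rewrite lerDr divr_ge0 // ltW.
exists (2 / d + 1) => // x y [Mx|->] [My|->] xy.
- have h1 := H _ _ Mx My xy.
  have h2 := H _ _ My Mx (negbT (contraNF (fun e => introT eqP (esym (eqP e))) xy)).
  rewrite distrC in h2.
  apply: (@le_trans _ _ (2 / d * `|x - y|)); last first.
    by rewrite ler_wpM2r ?normr_ge0 // lerDl.
  rewrite mulrAC ler_pdivlMr // mulrDl; lra.
- by rewrite normr0 addr0 subr0 ler_peMl.
- by rewrite normr0 add0r sub0r normrN ler_peMl.
- by rewrite eqxx in xy.
Qed.

Lemma lip_small (Y : normedModType R) (h : X -> Y) :
  (forall x, N0 x -> `|h x| <= `|x|) -> Defs.lipschitz_on N0 h.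
Proof.
move=> hs; have [L L1 HL] := sepL; exists L => x y Nx Ny.
have [->|xy] := eqVneq x y; first by rewrite !subrr !normr0 mulr0.
apply: (le_trans (ler_normB _ _)); apply: le_trans (HL _ _ Nx Ny xy).
by rewrite lerD ?hs.
Qed.

Section Lin.
Variables (Y : normedModType R) (g : X -> Y).
Hypothesis gl : is_linear g.
Lemma lin0 : g 0 = 0.
Proof. by have := gl (-1) 0 0; rewrite scaleN1r oppr0 addr0 scaleN1r addNr. Qed.
Lemma linB x y : g (x - y) = g x - g y.
Proof. by have := gl (-1) y x; rewrite !scaleN1r addrC => ->; rewrite addrC. Qed.
Lemma linZ a x : g (a *: x) = a *: g x.
Proof. by have := gl a x 0; rewrite addr0 lin0 addr0. Qed.
Lemma linD x y : g (x + y) = g x + g y.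
Proof. by have := gl 1 x y; rewrite !scale1r. Qed.
Lemma lip_lin S : is_bounded g -> Defs.lipschitz_on S g.
Proof. by move=> [C HC]; exists C => x y _ _; rewrite -linB HC. Qed.
End Lin.


Section Sum.
Variables (N : set X) (Nn : forall t, N t -> `|t| <= 1).

Definition inN (A : seq X) := uniq A /\ (forall t, t \in A -> N t).
Definition T (u : X -> R) (A : seq X) : X := \sum_(t <- A) u t *: t.
Definition abs_sum (u : X -> R) (A : seq X) : R := \sum_(t <- A) `|u t|.
Definition summ u := exists B, forall A, inN A -> abs_sum u A <= B.
Definition tail u (A0 : seq X) e := forall C, inN C -> (forall t, t \in C -> t \notin A0) ->
  abs_sum u C <= e.
Definition is_sum u s := forall e, 0 < e -> exists A0, inN A0 /\
  forall A, inN A -> {subset A0 <= A} -> `|s - T u A| <= e.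

Lemma T_le u A : inN A -> `|T u A| <= abs_sum u A.
Proof.
move=> [_ AN]; rewrite /T (le_trans (ler_norm_sum _ _ _)) // /abs_sum big_seq [X in _ <= X]big_seq.
apply: ler_sum => t tA; rewrite normrZ ler_piMr // Nn //; exact: AN.
Qed.

Lemma split_sub (V : zmodType) (F : X -> V) A0 A : uniq A0 -> uniq A ->
  {subset A0 <= A} ->
  \sum_(t <- A) F t = \sum_(t <- A0) F t + \sum_(t <- [seq t <- A | t \notin A0]) F t.
Proof.
move=> u0 uA sub; rewrite (bigID (fun t => t \in A0)) /=.
rewrite -[\sum_(t <- A | t \in A0) F t]big_filter -[\sum_(t <- A | t \notin A0) F t]big_filter.
congr (_ + _).
apply: perm_big; apply: uniq_perm => //; first exact: filter_uniq.
by move=> t; rewrite mem_filter; case: (boolP (t \in A0)) => //= /sub ->.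
Qed.

Lemma inN_filter (A0 : seq X) A : inN A -> inN [seq t <- A | t \notin A0].
Proof.
move=> [uA AN]; split; first exact: filter_uniq.
by move=> t; rewrite mem_filter => /andP[_ /AN].
Qed.

Lemma inN_undup A B : inN A -> inN B -> inN (undup (A ++ B)).
Proof.
move=> [_ AN] [_ BN]; split; first exact: undup_uniq.
by move=> t; rewrite mem_undup mem_cat => /orP[/AN|/BN].
Qed.

Lemma tail_close u A0 e A : inN A0 -> tail u A0 e -> inN A -> {subset A0 <= A} ->
  `|T u A - T u A0| <= e.
Proof.
move=> [u0 A0N] ht hA sub; rewrite /T (split_sub _ u0 hA.1 sub) addrAC subrr add0r.
have := T_le u (inN_filter A0 hA); rewrite /T => h.
apply: (le_trans h); apply: ht; first exact: inN_filter.
by move=> t; rewrite mem_filter => /andP[].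
Qed.

Lemma tail_mono u B e A : tail u B e -> {subset B <= A} -> tail u A e.
Proof.
move=> ht sub C hC dC; apply: ht => // t /dC; apply: contra; exact: sub.
Qed.

Lemma tails u : summ u -> forall e, 0 < e -> exists A0, inN A0 /\ tail u A0 e.
Proof.
move=> [B HB] e e0.
pose E := [set abs_sum u A | A in inN].
have hE : has_sup E.
  split; first by exists 0; exists [::]; [by split | by rewrite /abs_sum big_nil].
  by exists B => _ [A hA <-]; apply: HB.
have [_ [A0 hA0 <-] lt] := sup_adherent e0 hE; exists A0; split => // C hC dC.
have hAC : inN (A0 ++ C).
  split; last by move=> t; rewrite mem_cat => /orP[/hA0.2|/hC.2].
  rewrite cat_uniq hA0.1 hC.1 andbT /=; apply/hasPn => t /dC //.
have := ub_le_sup (proj2 hE) (ex_intro2 _ _ _ hAC erefl).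
rewrite /abs_sum big_cat /= -/(abs_sum u A0) -/(abs_sum u C); lra.
Qed.

Lemma small0 (a : R) : (forall e, 0 < e -> a <= e) -> a <= 0.
Proof. by move=> H; apply/ler_addgt0Pr => e e0; rewrite add0r H. Qed.

Lemma is_sum_unique u s s' : is_sum u s -> is_sum u s' -> s = s'.
Proof.
move=> hs hs'; apply/eqP; rewrite -subr_eq0 -normr_le0; apply: small0 => e e0.
have e2 : 0 < e / 2 by rewrite divr_gt0.
have [A0 [h0 H0]] := hs _ e2; have [A1 [h1 H1]] := hs' _ e2.
pose A := undup (A0 ++ A1); have hA : inN A by apply: inN_undup.
have s0 : {subset A0 <= A} by move=> t tA; rewrite mem_undup mem_cat tA.
have s1 : {subset A1 <= A} by move=> t tA; rewrite mem_undup mem_cat tA orbT.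
have := H0 A hA s0; have := H1 A hA s1.
have -> : s - s' = (s - T u A) - (s' - T u A) by rewrite opprB addrA subrK.
move=> a b; apply: (le_trans (ler_normB _ _)); lra.
Qed.

Lemma is_sum_le u s B : is_sum u s -> (forall A, inN A -> abs_sum u A <= B) -> `|s| <= B.
Proof.
move=> hs hB; apply/ler_addgt0Pr => e e0.
have [A0 [h0 H0]] := hs _ e0.
have := H0 A0 h0 (fun _ h => h).
have := hB _ h0; have := T_le u h0.
have : `|s| <= `|s - T u A0| + `|T u A0|.
  by rewrite -[X in `|X| <= _](subrK (T u A0)) ler_normD.
lra.
Qed.


Lemma zid (V : zmodType) (a b c : V) : (a - c) - (a - b) = b - c.
Proof. by rewrite opprB addrC addrA addrNK. Qed.

Lemma inv_gt0 (k : nat) : 0 < k.+1%:R^-1 :> R.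
Proof. by rewrite invr_gt0 ltr0Sn. Qed.

Lemma sub_undupl (A B : seq X) : {subset A <= undup (A ++ B)}.
Proof. by move=> t tA; rewrite mem_undup mem_cat tA. Qed.
Lemma sub_undupr (A B : seq X) : {subset B <= undup (A ++ B)}.
Proof. by move=> t tA; rewrite mem_undup mem_cat tA orbT. Qed.

Lemma is_sum_ex u : summ u -> exists s, is_sum u s.
Proof.
move=> hu.
have [Af HAf] := choice (fun k => tails hu (inv_gt0 k)).
pose sq k := T u (Af k).
have close : forall j k, `|sq j - sq k| <= j.+1%:R^-1 + k.+1%:R^-1.
  move=> j k; have hU := inN_undup (HAf j).1 (HAf k).1.
  have := tail_close (HAf j).1 (HAf j).2 hU (@sub_undupl _ _).
  have := tail_close (HAf k).1 (HAf k).2 hU (@sub_undupr _ _).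
  set a := T u _; rewrite -/(sq j) -/(sq k) => h1 h2.
  have -> : sq j - sq k = (a - sq k) - (a - sq j) by rewrite zid.
  by apply: (le_trans (ler_normB _ _)); rewrite addrC lerD.
have : cauchy (sq @ \oo).
  apply/cauchyP => eps eps0.
  have [K _ HK] := near_infty_natSinv_lt (PosNum (divr_gt0 eps0 (ltr0n _ 2))).
  exists (sq K); apply: filterS (nbhs_infty_ge K) => j /= Kj; rewrite -ball_normE /=.
  apply: (le_lt_trans (close K j)); rewrite [eps](splitr eps).
  by apply: ltrD; [exact: (HK K (leqnn K)) | exact: (HK j Kj)].
move=> /cauchy_cvg cv; exists (lim (sq @ \oo)) => e e0.
have e3 : 0 < e / 3 by rewrite divr_gt0.
have [K _ HK] := near_infty_natSinv_lt (PosNum e3).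
exists (Af K); split; first exact: (HAf K).1.
move=> A hA sub.
have [J _ HJ] := (cvgrPdist_lt _ _).1 cv _ e3.
pose j := maxn J K.
have hJ := HJ j (leq_maxl _ _).
have hK : j.+1%:R^-1 < e / 3 := HK j (leq_maxr _ _).
have hKK : K.+1%:R^-1 < e / 3 := HK K (leqnn _).
have hU := inN_undup (HAf j).1 hA.
have h1 := tail_close (HAf j).1 (HAf j).2 hU (@sub_undupl _ _).
have h2 := tail_close hA (tail_mono (HAf K).2 sub) hU (@sub_undupr _ _).
move: h1 h2 hJ; set a := T u _; rewrite -/(sq j) => h1 h2 hJ.
set l := lim _ in hJ *.
have -> : l - T u A = (l - sq j) + ((a - T u A) - (a - sq j)).
  by rewrite zid addrA addrNK.
apply: (le_trans (ler_normD _ _)); apply: (le_trans (lerD (lexx _) (ler_normB _ _))).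
apply: (le_trans (lerD (ltW hJ) (lerD (le_trans h2 (ltW hKK)) (le_trans h1 (ltW hK))))).
lra.
Qed.

Lemma T_Z a u A : T (fun t => a * u t) A = a *: T u A.
Proof. by rewrite /T scaler_sumr; apply: eq_bigr => t _; rewrite scalerA. Qed.
Lemma T_D u v A : T (fun t => u t + v t) A = T u A + T v A.
Proof. by rewrite /T -big_split; apply: eq_bigr => t _; rewrite scalerDl. Qed.

Lemma is_sumZ a u s : is_sum u s -> is_sum (fun t => a * u t) (a *: s).
Proof.
move=> hs e e0; have a1 : 0 < `|a| + 1 by rewrite ltr_wpDl.
have [A0 [h0 H0]] := hs _ (divr_gt0 e0 a1); exists A0; split => // A hA sub.
rewrite T_Z -scalerBr normrZ (le_trans (ler_wpM2l (normr_ge0 _) (H0 A hA sub))) //.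
apply: (@le_trans _ _ ((`|a| + 1) * (e / (`|a| + 1)))).
  by apply: ler_wpM2r; [rewrite divr_ge0 ?ltW | rewrite lerDl].
by rewrite mulrC divfK ?gt_eqF.
Qed.

Lemma is_sumD u v s s' : is_sum u s -> is_sum v s' -> is_sum (fun t => u t + v t) (s + s').
Proof.
move=> hs hs' e e0; have e2 : 0 < e / 2 by rewrite divr_gt0.
have [A0 [h0 H0]] := hs _ e2; have [A1 [h1 H1]] := hs' _ e2.
exists (undup (A0 ++ A1)); split; first exact: inN_undup.
move=> A hA sub; rewrite T_D.
have := H0 A hA (fun t tA => sub _ (@sub_undupl _ _ _ tA)).
have := H1 A hA (fun t tA => sub _ (@sub_undupr _ _ _ tA)).
have -> : s + s' - (T u A + T v A) = (s - T u A) + (s' - T v A).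
  by rewrite opprD addrACA.
move=> a b; apply: (le_trans (ler_normD _ _)); lra.
Qed.

Lemma esum_bound u B : (forall A, inN A -> abs_sum u A <= B) ->
  (\esum_(t in N) (`|u t|%:E) <= B%:E)%E.
Proof.
move=> hB; rewrite /esum; apply: ge_ereal_sup => _ [S [fS SN] <-].
rewrite fsbig_finite // sumEFin lee_fin; apply: hB; split; first exact: finmap.fset_uniq.
by move=> t; rewrite in_fset_set // inE => /SN.
Qed.

Lemma ell1_abs u : Defs.ell1 N u -> forall A, inN A -> abs_sum u A <= Defs.ell1_norm N u.
Proof.
move=> [_ hu] A [uA AN].
have fin : (\esum_(t in N) (`|u t|%:E))%E \is a fin_num.
  by rewrite ge0_fin_numE // esum_ge0 // => t _; rewrite lee_fin.
rewrite /ell1_norm -lee_fin fineK //; apply: esum_ge; exists [set` A].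
  by split; [exact: finite_seq | move=> t /= tA; exact: AN].
by rewrite -fsbig_seq // sumEFin.
Qed.

Lemma ell1_summ u : Defs.ell1 N u -> summ u.
Proof. by move=> hu; exists (Defs.ell1_norm N u); apply: ell1_abs. Qed.

Lemma lin_T (g : X -> R^o) u A : is_linear g -> g (T u A) = \sum_(t <- A) u t * g t.
Proof.
move=> gl; rewrite /T; elim: A => [|a A IH]; first by rewrite !big_nil (lin0 gl).
by rewrite !big_cons linD // linZ // IH.
Qed.
End Sum.
Definition crd (x : X) (c : X -> R) : R :=
  if `[< M x >] then Num.sg (c (nz x)) * `|x| else 0.

Lemma crd_small x c : `|crd x c| <= `|x|.
Proof.
rewrite /crd; case: ifP => _; last by rewrite normr0.
rewrite normrM normr_id ler_piMl // normr_sg; by case: (_ != 0).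
Qed.

Lemma crd_bnd x : crd x \in @bnd R (X -> R).
Proof. by rewrite inE; exists `|x|; apply: crd_small. Qed.

Definition f0 (x : X) : linf R (X -> R) := Linf (crd_bnd x).

Lemma f0_small x : N0 x -> `|f0 x| <= `|x|.
Proof. by move=> _; rewrite normE; apply: nrm_le => //; apply: crd_small. Qed.

Lemma f0_0 : f0 0 = 0.
Proof.
apply: val_inj; apply/funext => c /=; rewrite /crd.
by case: ifP => // /asboolP /M0.
Qed.

Section WithG.
Hypothesis hF : free_basis (M `|` [set 0]).
Variables (G : X -> linf R (X -> R)).
Hypotheses (Gl : is_linear G) (Gb : is_bounded G) (GE : forall x, N0 x -> G x = f0 x).

Let N := [set (`|m|)^-1 *: m | m in M].

Definition phi (x : X) (t : X) : R := if `[< N t >] then G x (unit_vec R t) else 0.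

Lemma phi_lin a x y t : phi (a *: x + y) t = a * phi x t + phi y t.
Proof. by rewrite /phi; case: ifP; rewrite ?mulr0 ?addr0 // Gl. Qed.

Lemma phi_le x t : `|phi x t| <= `|G x|.
Proof. by rewrite /phi; case: ifP => _; rewrite ?normr0 ?normr_ge0 // normE nrm_ge. Qed.

Lemma phi_M m t : M m -> phi m t = if t == nz m then `|m| else 0.
Proof.
move=> Mm; rewrite /phi; case: ifP => [_|/asboolPn Nt].
  rewrite GE; last by left.
  rewrite /= /crd asboolT // /unit_vec.
  rewrite (eq_sym (nz m)).
  by case: ifP; rewrite ?sgr1 ?sgr0 ?mul1r ?mul0r.
case: ifP => // /eqP te; case: Nt; rewrite te; by exists m.
Qed.

Lemma sum_pick (A : seq X) (a : X) (F : X -> R) K : uniq A ->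
  \sum_(t <- A) F t * (if t == a then K else 0) = if a \in A then F a * K else 0.
Proof.
move=> uA; case: ifP => aA.
  rewrite (bigD1_seq a) //= eqxx big1 ?addr0 // => t /negbTE ->; by rewrite mulr0.
rewrite big1_seq // => t /andP[_ tA]; case: eqP => [e|]; last by rewrite mulr0.
by rewrite -e tA in aA.
Qed.

Lemma sum_const_seq (A : seq X) (K : R) : \sum_(t <- A) K = K *+ size A.
Proof. by elim: A => [|a A IH]; rewrite ?big_nil ?big_cons ?IH ?mulrS. Qed.

Lemma sign_bound : exists C, forall x A, uniq A -> (forall t, t \in A -> N t) ->
  \sum_(t <- A) `|phi x t| <= C * `|x|.
Proof.
have [C HC] := Gb; exists C => x A uA AN.
pose c := fun s => if s \in A then Num.sg (phi x s) else 0.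
pose h1 : X -> R^o := fun z => G z c.
pose h2 : X -> R^o := fun z => \sum_(t <- A) c t * phi z t.
have h1l : is_linear h1 by move=> a y w; rewrite /h1 Gl.
have h1b : is_bounded h1.
  exists C => w; apply: le_trans (HC w); by rewrite /h1 normE nrm_ge.
have h2l : is_linear h2.
  move=> a y w; rewrite /h2 /GRing.scale /= mulr_sumr -big_split /=.
  by apply: eq_bigr => t _; rewrite phi_lin mulrDr mulrCA.
have h2b : is_bounded h2.
  exists (C *+ size A) => w; rewrite /h2 (le_trans (ler_norm_sum _ _ _))//.
  apply: (@le_trans _ _ (\sum_(t <- A) `|G w|)).
    apply: ler_sum => t _; rewrite normrM (le_trans _ (phi_le w t)) //.
    rewrite ler_piMl // /c; case: ifP => _; rewrite ?normr0 // normr_sg.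
    by case: (_ != 0).
  by rewrite sum_const_seq mulrnAl ler_wMn2r.
have agree : forall z, N0 z -> h2 z = h1 z.
  move=> z [Mz|->]; last by rewrite (lin0 h1l) (lin0 h2l).
  rewrite /h2 /h1 GE; last by left.
  rewrite (eq_bigr (fun t => c t * (if t == nz z then `|z| else 0))); last first.
    by move=> t _; rewrite phi_M.
  rewrite sum_pick // /= /crd asboolT // /c.
  by case: (nz z \in A); rewrite ?sgr0 ?mul0r ?sgr_id.
have E := (hF.2.2 R^o h1 (lip_lin h1l _ h1b) (lin0 h1l)).2 h1 h2 h1l h1b (fun _ _ => erefl) h2l h2b agree.
have -> : \sum_(t <- A) `|phi x t| = h2 x.
  rewrite /h2 big_seq [RHS]big_seq; apply: eq_bigr => t tA.
  by rewrite /c tA normrEsg.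
by rewrite -E /h1 (le_trans (ler_norm _)) // (le_trans _ (HC x)) // normE nrm_ge.
Qed.

Lemma NN t : N t -> `|t| <= 1.
Proof. by move=> [m Mm <-]; rewrite -/(nz m) norm_nz. Qed.

Lemma phi0 t : phi 0 t = 0.
Proof. by rewrite /phi (lin0 Gl); case: ifP. Qed.

Lemma phiZ a x t : phi (a *: x) t = a * phi x t.
Proof. by rewrite -[a *: x]addr0 phi_lin phi0 addr0. Qed.

Lemma phi_unit n : N n -> phi n = unit_vec R n.
Proof.
move=> [m Mm <-]; apply/funext => t; rewrite phiZ -/(nz m) phi_M // /unit_vec.
by case: ifP => _; rewrite ?mulr0 // mulVf // normr_eq0 M_neq0.
Qed.

Lemma sum_pickX (A : seq X) (a v : X) : uniq A -> a \in A ->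
  \sum_(t <- A) (if t == a then v else 0) = v.
Proof.
move=> uA aA; rewrite (bigD1_seq a) //= eqxx big1 ?addr0 // => t /negbTE ->.
by [].
Qed.

Lemma is_sum_phiM m : M m -> is_sum N (phi m) m.
Proof.
move=> Mm e e0; exists [:: nz m]; split.
  by split => // t; rewrite inE => /eqP ->; exists m.
move=> A [uA _] sub.
rewrite /T (eq_bigr (fun t => if t == nz m then `|m| *: nz m else 0)); last first.
  by move=> t _; rewrite phi_M //; case: ifP => [/eqP ->|_]; rewrite ?scale0r.
rewrite sum_pickX //; last by apply: sub; rewrite inE.
rewrite /nz scalerA mulfV ?scale1r ?subrr ?normr0 ?ltW // normr_eq0 M_neq0 //.
Qed.

Lemma mainG : exists phi : X -> (X -> R),
    (forall (a : R) (x y : X) (t : X), phi (a *: x + y) t = a * phi x t + phi y t) /\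
    (forall x, ell1 N (phi x)) /\
    (forall x y, phi x = phi y -> x = y) /\
    (forall u, ell1 N u -> exists x, phi x = u) /\
    (exists C : R, forall x, ell1_norm N (phi x) <= C * `|x|) /\
    (exists C : R, forall x, `|x| <= C * ell1_norm N (phi x)) /\
    (forall n, N n -> phi n = unit_vec R n).
Proof.
have [C HC] := sign_bound.
have sumP : forall x, is_sum N (phi x) (xget 0 (is_sum N (phi x))).
  move=> x; apply: xgetPex; apply: (is_sum_ex NN); exists (C * `|x|) => A [uA AN].
  exact: HC.
pose P x := xget 0 (is_sum N (phi x)).
have Pl : is_linear P.
  move=> a x y; apply: (is_sum_unique (sumP (a *: x + y))).
  have -> : phi (a *: x + y) = (fun t => a * phi x t + phi y t).
    by apply/funext => t; rewrite phi_lin.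
  exact: is_sumD (is_sumZ a (sumP x)) (sumP y).
have Pb : is_bounded P.
  by exists C => x; apply: (is_sum_le NN (sumP x)) => A [uA AN]; apply: HC.
have idl : is_linear (@id X) by [].
have idb : is_bounded (@id X) by exists 1 => x; rewrite mul1r.
have PM : forall x, N0 x -> P x = id x.
  move=> x [Mx|->]; last by rewrite (lin0 Pl).
  exact: (is_sum_unique (sumP x) (is_sum_phiM Mx)).
have Pid := (hF.2.2 X id (lip_lin idl _ idb) erefl).2 P id Pl Pb PM idl idb (fun _ _ => erefl).
have Px : forall x, P x = x by move=> x; rewrite Pid.
have ellx : forall x, ell1 N (phi x).
  move=> x; split; first by move=> t Nt; rewrite /phi asboolF.
  apply: (le_lt_trans (esum_bound (fun A hA => HC x A hA.1 hA.2))); exact: ltry.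
exists phi; split; first exact: phi_lin.
split; first exact: ellx.
split; first by move=> x y e; rewrite -(Px x) -(Px y) /P e.
split.
  move=> u hu; have [s hs] := is_sum_ex NN (ell1_summ hu); exists s.
  apply/funext => t; case: (pselect (N t)) => Nt; last first.
    by rewrite /phi asboolF // hu.1.
  have [CG HCG] := Gb.
  have K0 : 0 < `|CG| + 1 by rewrite ltr_wpDl.
  have hb : forall z, `|phi z t| <= (`|CG| + 1) * `|z|.
    move=> z; apply: (le_trans (phi_le z t)); apply: (le_trans (HCG z)).
    by rewrite ler_wpM2r // (le_trans (ler_norm _)) // lerDl.
  pose h : X -> R^o := fun z => phi z t.
  have hl : is_linear h by move=> a y w; rewrite /h phi_lin.
  apply/eqP; rewrite -subr_eq0 -normr_le0; apply: small0 => e e0.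
  have [A0 [h0 H0]] := hs _ (divr_gt0 e0 K0).
  have hA : inN N (undup (t :: A0)).
    split; first exact: undup_uniq.
    by move=> a; rewrite mem_undup inE => /orP[/eqP ->|/h0.2].
  have := H0 _ hA (fun a aA => ltac:(by rewrite mem_undup inE aA orbT)).
  have tA : t \in undup (t :: A0) by rewrite mem_undup inE eqxx.
  have ht : h (T u (undup (t :: A0))) = u t.
    rewrite lin_T // (eq_big_seq (fun a => if a == t then u t else 0)).
      rewrite (bigD1_seq t) ?undup_uniq //= eqxx big1 ?addr0 // => a /negbTE ->.
      by [].
    move=> a aA; rewrite /h phi_unit; last exact: hA.2.
    rewrite /unit_vec (eq_sym t).
    by case: eqP => [->|_]; rewrite ?mulr1 ?mulr0.
  rewrite -ht -/(h s) -linB // => hle.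
  apply: (le_trans (hb _)); rewrite -(@ler_pM2l _ (`|CG| + 1)^-1) ?invr_gt0 //.
  by rewrite mulrA mulVf ?gt_eqF // mul1r mulrC.
split.
  exists C => x; rewrite /ell1_norm.
  have f1 : (\esum_(t in N) (`|phi x t|%:E))%E \is a fin_num.
    rewrite ge0_fin_numE; first exact: (ellx x).2.
    by apply: esum_ge0 => t _; rewrite lee_fin.
  by apply: (fine_le f1 _ (esum_bound (fun A hA => HC x A hA.1 hA.2))).
split.
  exists 1 => x; rewrite mul1r -{1}(Px x).
  apply: (is_sum_le NN (sumP x)); exact: (ell1_abs (ellx x)).
exact: phi_unit.
Qed.
End WithG.
End Main.

Theorem theorem4p9 (R : realType) (X : completeNormedModType R) (M : set X) :
  top_lin_indep M ->
  free_basis (M `|` [set 0]) ->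
  let N := [set (`|m|)^-1 *: m | m in M] in
  exists phi : X -> (X -> R),
    (forall (a : R) (x y : X) (t : X), phi (a *: x + y) t = a * phi x t + phi y t) /\
    (forall x, ell1 N (phi x)) /\
    (forall x y, phi x = phi y -> x = y) /\
    (forall u, ell1 N u -> exists x, phi x = u) /\
    (exists C : R, forall x, ell1_norm N (phi x) <= C * `|x|) /\
    (exists C : R, forall x, `|x| <= C * ell1_norm N (phi x)) /\
    (forall n, N n -> phi n = unit_vec R n).
Proof.
move=> hT hF N.
have [G [Gl Gb GE]] := (hF.2.2 _ (f0 M) (lip_small hT (@f0_small _ _ M)) (f0_0 hT)).1.
exact: (mainG hT hF Gl Gb GE).
Qed.
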